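(* Let $p\in(0,1)$ and let $(\lambda_n)_{n\ge1}$ be a sequence with $\lambda_1=1$ and $0\le\lambda_n\le\lambda_{n-1}$ for all $n>1$. Let $r_1,r_2,\dots$ be $\{0,1\}$-valued random variables with $\Pr(r_1=1)=p$ and, for every $n\ge2$, $\Pr(r_n=1\mid r_1,\dots,r_{n-1})=\lambda_n p+(1-\lambda_n)\bar p_{n-1}$, where $\bar p_m=\frac1m\sum_{i=1}^m r_i$. If $\bar p_n$ is consistent, i.e. $\lim_{n\to\infty}\Pr(|\bar p_n-p|>\epsilon)=0$ for every $\epsilon>0$, then $\lim_{n\to\infty}\sum_{i=1}^n\lambda_i^2=\infty$. *)

(* Defs.v *)
From HB Require Import structures.
From mathcomp Require Import all_boot all_order all_algebra.
From mathcomp Require Import all_classical all_reals all_analysis.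
Set Implicit Arguments. Unset Strict Implicit. Unset Printing Implicit Defensive.
Import Order.TTheory GRing.Theory Num.Theory.
Local Open Scope ring_scope.
Local Open Scope classical_set_scope.

Definition pbar {T : Type} {R : realType} (r : nat -> T -> R) (m : nat) (t : T) : R :=
  (m%:R)^-1 * \sum_(1 <= i < m.+1) r i t.

Definition cyl {T : Type} {R : realType} (r : nat -> T -> R) (n : nat) (x : nat -> R)
  : set T := [set t | forall i, (1 <= i < n)%N -> r i t = x i].

(* Main.v *)
Require Import Defs.
From HB Require Import structures.
From mathcomp Require Import all_boot all_order all_algebra.
From mathcomp Require Import all_classical all_reals all_analysis.
From mathcomp Require Import ring lra measurable_realfun.
Set Implicit Arguments. Unset Strict Implicit.
Import Order.TTheory GRing.Theory Num.Theory.
Local Open Scope ring_scope.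
Local Open Scope classical_set_scope.

Section Aux.
Variables (R : realType) (d : measure_display) (T : measurableType d).
Variables (P : probability T R) (r : nat -> T -> R).
Hypothesis hr : forall i, measurable_fun setT (r i).
Hypothesis h01 : forall i t, r i t = 0 \/ r i t = 1.

Definition xs (s : seq R) : nat -> R := fun i => nth 0 s i.-1.
Definition Cs (s : seq R) : set T := cyl r (size s).+1 (xs s).
Definition Ssum (s : seq R) : R := \sum_(1 <= i < (size s).+1) xs s i.
Definition mean (s : seq R) : R := (size s)%:R^-1 * Ssum s.
Fixpoint pats (n : nat) : seq (seq R) :=
  if n is m.+1 then flatten [seq [:: rcons s 0; rcons s 1] | s <- pats m]
  else [:: [::]].
Definition nu (B : set T) (s : seq R) : R := fine (P (Cs s `&` B)).

Lemma sum_patsS (F : seq R -> R) n :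
  \sum_(s <- pats n.+1) F s = \sum_(s <- pats n) (F (rcons s 0) + F (rcons s 1)).
Proof.
rewrite /= big_flatten /= big_map; apply: eq_bigr => s _.
by rewrite big_cons big_cons big_nil addr0.
Qed.

Lemma meas_eq i b : measurable [set t | r i t = b].
Proof.
have := hr i measurableT (measurable_set1 b); rewrite setTI.
by congr measurable; apply/seteqP; split => t /=.
Qed.

Lemma meas_cyl k x : measurable (cyl r k x).
Proof.
have -> : cyl r k x = \bigcap_i [set t | (1 <= i < k)%N -> r i t = x i].
  apply/seteqP; split => t /=.
    by move=> H i _ /= Hi; apply: H.
  by move=> H i Hi; apply: (H i I).
apply: bigcapT_measurable => i.
have [Hi|Hi] : (1 <= i < k)%N \/ ~~ (1 <= i < k)%N by case: (1 <= i < k)%N; auto.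
  have -> : [set t | (1 <= i < k)%N -> r i t = x i] = [set t | r i t = x i].
    by apply/seteqP; split => t /=; [move=> H; apply: H | move=> H _].
  exact: meas_eq.
have -> : [set t | (1 <= i < k)%N -> r i t = x i] = setT.
  by apply/seteqP; split => t //= _ H; rewrite H in Hi.
exact: measurableT.
Qed.

Lemma meas_Cs s : measurable (Cs s).
Proof. exact: meas_cyl. Qed.

Lemma Cs_rcons s b : Cs (rcons s b) = Cs s `&` [set t | r (size s).+1 t = b].
Proof.
rewrite /Cs /cyl /xs size_rcons; apply/seteqP; split => t /=.
  move=> H; split.
    move=> i /andP[i1 i2]; rewrite H; last by rewrite i1 ltnS ltnW.
    by rewrite nth_rcons; case: i i1 i2 => //= i _; rewrite ltnS => ->.
  rewrite H //= ?nth_rcons ?ltnn ?eqxx //.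
move=> [H1 H2] i /andP[i1 i2]; rewrite nth_rcons.
case: i i1 i2 => //= i _ Hi.
case: ltnP => Hl.
  by rewrite H1 //= ltnS.
have -> : i = size s by apply/eqP; rewrite eqn_leq Hl andbT -ltnS.
by rewrite eqxx.
Qed.

Lemma Ssum_rcons s b : Ssum (rcons s b) = Ssum s + b.
Proof.
rewrite /Ssum size_rcons big_nat_recr //=; congr (_ + _).
  apply: eq_big_nat => i /andP[i1 i2]; rewrite /xs nth_rcons.
  by case: i i1 i2 => //= i _; rewrite ltnS => ->.
by rewrite /xs /= nth_rcons ltnn eqxx.
Qed.


Lemma finP A : measurable A -> P A \is a fin_num.
Proof. by move=> mA; apply: fin_num_measure. Qed.

Lemma nu_ge0 B s : 0 <= nu B s.
Proof. exact: fine_ge0. Qed.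

Lemma nu_split B s : measurable B ->
  nu B s = nu B (rcons s 0) + nu B (rcons s 1).
Proof.
move=> mB; rewrite /nu !Cs_rcons.
have m0 := meas_eq (size s).+1 0; have m1 := meas_eq (size s).+1 1.
have mC := meas_Cs s.
rewrite -fineD; [|apply: finP; apply: measurableI => //; exact: measurableI
                 |apply: finP; apply: measurableI => //; exact: measurableI].
rewrite -measureU; [|apply: measurableI => //; exact: measurableI
                    |apply: measurableI => //; exact: measurableI|].
  congr (fine (P _)); apply/seteqP; split => t /=.
    move=> [Ht HB]; case: (h01 (size s).+1 t) => H; [left|right]; by [].
  by case=> -[[]].
apply/seteqP; split => t //= [[[_ ->] _] [[_ H] _]].
by move: H; apply/eqP; rewrite eq_sym oner_eq0.
Qed.

Lemma Cs_nil : Cs [::] = setT.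
Proof. by apply/seteqP; split => t //= _ i /andP[i1 i2]; case: i i1 i2. Qed.

Lemma sum_nu B n : measurable B -> \sum_(s <- pats n) nu B s = fine (P B).
Proof.
move=> mB; elim: n => [|n IH].
  by rewrite /= big_cons big_nil addr0 /nu Cs_nil setTI.
by rewrite sum_patsS -IH; apply: eq_bigr => s _; rewrite -nu_split.
Qed.

Lemma pats_inv n s : s \in pats n -> size s = n /\ 0 <= Ssum s <= n%:R.
Proof.
elim: n s => [|n IH] s /=.
  by rewrite inE => /eqP ->; rewrite /Ssum big_geq // lexx.
move=> /flattenP [u /mapP [s' Hs' ->]]; rewrite !inE => /orP[] /eqP ->;
  have [Hz /andP[H1 H2]] := IH _ Hs';
  rewrite size_rcons Ssum_rcons Hz -natr1; split => //; apply/andP; split; lra.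
Qed.

End Aux.

Unset Implicit Arguments. Set Strict Implicit.

Lemma alg_step (R : realType) (n m p l mu mu0 mu1 : R) : 0 < n ->
  0 <= mu0 -> 0 <= mu1 -> mu = mu0 + mu1 -> mu1 = (l * p + (1 - l) * m) * mu ->
  (1 - l / (n + 1)) ^+ 2 * ((m - p) ^+ 2 * mu) <=
  ((n * m + 0) / (n + 1) - p) ^+ 2 * mu0 + ((n * m + 1) / (n + 1) - p) ^+ 2 * mu1.
Proof.
move=> n0 h0 h1 hmu hq.
set A := (n * m + 0) / (n + 1) - p; set B := (n * m + 1) / (n + 1) - p.
have hn1 : n + 1 != 0 by rewrite gt_eqF // ltr_wpDr.
have K : mu0 * A + mu1 * B = mu * ((1 - l / (n + 1)) * (m - p)).
  have -> : mu0 = mu - mu1 by rewrite hmu; ring.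
  rewrite hq /A /B; field => //.
have CS : (mu0 * A + mu1 * B) ^+ 2 <= mu * (A ^+ 2 * mu0 + B ^+ 2 * mu1).
  rewrite hmu; have := mulr_ge0 (mulr_ge0 h0 h1) (sqr_ge0 (A - B)); nra.
have : 0 <= mu by rewrite hmu addr_ge0.
rewrite le_eqVlt => /orP[/eqP mu0'|mupos].
  move: mu0' => /esym mu0'.
  have z0 : mu0 = 0 by lra. have z1 : mu1 = 0 by lra.
  by rewrite mu0' z0 z1 !(mulr0, mul0r, addr0).
rewrite K in CS.
rewrite -(ler_pM2l mupos); apply: le_trans CS; rewrite le_eqVlt; apply/orP; left;
  apply/eqP; ring.
Qed.

Lemma expR_bound (R : realType) (a : R) : 0 <= a <= 1/2 -> expR (-4 * a) <= (1 - a) ^+ 2.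
Proof.
move=> /andP[a0 a1].
have e2 : expR (-4 * a) = expR (- (2 * a)) * expR (- (2 * a)).
  by rewrite -expRD; congr expR; ring.
have y1 := expR_ge1Dx (2 * a).
set y := expR (2 * a) in y1.
have ypos : 0 < y by apply: expR_gt0.
have h : 1 <= (1 - a) * y by nra.
have k : expR (- (2 * a)) <= 1 - a.
  rewrite expRN -/y.
  have -> : 1 - a = y^-1 * ((1 - a) * y) by field; rewrite gt_eqF.
  rewrite -[X in X <= _]mulr1; apply: ler_wpM2l => //.
  by rewrite invr_ge0 ltW.
have k0 : 0 <= expR (- (2 * a)) by apply: ltW; apply: expR_gt0.
rewrite e2 expr2; apply: ler_pM => //.
Qed.

Section Main.
Variables (R : realType) (d : measure_display) (T : measurableType d).
Variables (P : probability T R) (p : R) (lam : nat -> R) (r : nat -> T -> R).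
Hypothesis hp : 0 < p < 1.
Hypothesis hl1 : lam 1%N = 1.
Hypothesis hlam : forall n, (1 < n)%N -> 0 <= lam n <= lam n.-1.
Hypothesis hr : forall i, measurable_fun setT (r i).
Hypothesis h01 : forall i t, r i t = 0 \/ r i t = 1.
Hypothesis hP1 : P [set t | r 1%N t = 1] = p%:E.
Hypothesis hcond : forall (n : nat) (x : nat -> R), (2 <= n)%N ->
     P (cyl r n x `&` [set t | r n t = 1]) =
     ((lam n * p + (1 - lam n) * ((n.-1)%:R^-1 * \sum_(1 <= i < n) x i))%:E
        * P (cyl r n x))%E.

Let mu := nu P r setT.

Lemma lam_bnd n : (1 <= n)%N -> 0 <= lam n <= 1.
Proof.
elim: n => // n IH _; case: n IH => [|n] IH; first by rewrite hl1 ler01 lexx.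
have /andP[a b] := hlam n.+2 isT.
by have /andP[_ c] := IH isT; rewrite a (le_trans b c).
Qed.

Lemma mu_rcons1 s : (1 <= size s)%N ->
  mu (rcons s 1) = (lam (size s).+1 * p + (1 - lam (size s).+1) * mean s) * mu s.
Proof.
move=> hs; rewrite /mu /nu !setIT Cs_rcons.
rewrite hcond ?ltnS //= fineM //; last by apply: finP; apply: meas_Cs.
Qed.

Lemma mu_nil : mu [::] = 1.
Proof. by rewrite /mu /nu Cs_nil setIT probability_setT. Qed.

Lemma mu_one : mu [:: 1] = p.
Proof.
rewrite /mu /nu setIT.
have -> : Cs r [:: 1] = [set t | r 1%N t = 1].
  apply/seteqP; split => t /=.
    by move=> H; rewrite (H 1%N).
  by move=> H [|[|i]] //= _; rewrite H.
by rewrite hP1.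
Qed.

Lemma mu_zero : mu [:: 0] = 1 - p.
Proof.
have := nu_split P hr h01 [::] (@measurableT _ T).
by rewrite -/mu mu_nil /= -/mu mu_one => ->; rewrite addrK.
Qed.

Definition V n := \sum_(s <- pats R n) (mean s - p) ^+ 2 * mu s.

Lemma mean1 (b : R) : mean [:: b] = b.
Proof. by rewrite /mean /Ssum big_nat1 /= invr1 mul1r. Qed.

Lemma V1 : V 1 = p * (1 - p).
Proof.
rewrite /V /= big_cons big_cons big_nil !mean1 mu_zero mu_one; ring.
Qed.

Lemma mean_rcons s (b : R) : (1 <= size s)%N ->
  mean (rcons s b) = ((size s)%:R * mean s + b) / ((size s)%:R + 1).
Proof.
move=> hs; rewrite /mean size_rcons Ssum_rcons mulrA mulfV ?mul1r; last first.
  by rewrite pnatr_eq0 -lt0n.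
by rewrite -natr1 mulrC.
Qed.

Lemma Vstep n : (1 <= n)%N -> (1 - lam n.+1 / (n%:R + 1)) ^+ 2 * V n <= V n.+1.
Proof.
move=> hn; rewrite /V sum_patsS mulr_sumr big_seq [X in _ <= X]big_seq.
apply: ler_sum => s Hs.
have [Hz /andP[h0 h1]] := pats_inv Hs.
have hmu := nu_split P hr h01 s (@measurableT _ T).
rewrite !mean_rcons ?Hz //.
apply: alg_step => //.
- by rewrite ltr0n.
- exact: nu_ge0.
- exact: nu_ge0.
- by rewrite mu_rcons1 Hz.
Qed.

Definition Tsum n := \sum_(2 <= k < n.+1) lam k / k%:R.

Lemma Vlow n : (1 <= n)%N -> p * (1 - p) * expR (-4 * Tsum n) <= V n.
Proof.
elim: n => // n IH _; case: n IH => [|n] IH.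
  by rewrite /Tsum big_geq // mulr0 expR0 mulr1 V1.
have {}IH := IH isT.
apply: (le_trans _ (Vstep n.+1 isT)).
rewrite /Tsum big_nat_recr //= -/(Tsum n.+1).
set a := lam n.+2 / n.+2%:R.
have -> : -4 * (Tsum n.+1 + a) = -4 * a + -4 * Tsum n.+1 by ring.
rewrite expRD.
have -> : lam n.+2 / (n.+1%:R + 1) = a by rewrite /a natr1.
have ha : 0 <= a <= 1/2.
  have /andP[l0 l1] := lam_bnd n.+2 isT.
  rewrite /a; apply/andP; split; first by rewrite divr_ge0 ?ler0n.
  rewrite ler_pdivrMr ?ltr0n //.
  have : 2 <= n.+2%:R :> R by rewrite ler_nat.
  lra.
rewrite mulrCA; apply: ler_pM.
- by apply: ltW; apply: expR_gt0.
- apply: mulr_ge0; last by apply: ltW; apply: expR_gt0.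
  move: hp => /andP[? ?]; apply: mulr_ge0; lra.
- exact: expR_bound.
- exact: IH.
Qed.

Definition Lsum n := \sum_(1 <= i < n.+1) lam i ^+ 2.

Lemma Tsum_le n : (1 <= n)%N -> Tsum n <= Lsum n + 1 - n%:R^-1.
Proof.
elim: n => // n IH _; case: n IH => [|n] IH.
  rewrite /Tsum /Lsum big_geq // big_nat1 hl1 expr1n invr1; lra.
have {}IH := IH isT.
rewrite /Tsum /Lsum big_nat_recr //= [X in _ <= X + _ - _]big_nat_recr //=.
rewrite -/(Tsum n.+1) -/(Lsum n.+1).
set x := lam n.+2.
set N : R := n.+1%:R.
have N1 : 1 <= N by rewrite /N ler1n.
have -> : n.+2%:R = N + 1 by rewrite /N natr1.
set y := (N + 1)^-1; set z := N^-1.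
have zy : z - y = z * y by rewrite /z /y; field; rewrite ?gt_eqF //; lra.
have y0 : 0 < y by rewrite /y invr_gt0; lra.
have yz : y <= z by rewrite /y /z lef_pV2 ?posrE; lra.
have key : x * y <= x ^+ 2 + (z - y).
  rewrite zy; have := sqr_ge0 (x - y); have := sqr_ge0 x; have := sqr_ge0 y; nra.
move: IH; rewrite -/z => IH.
rewrite /y in key zy yz y0 *.
lra.
Qed.

Definition Aset n eps := [set t | eps < `|pbar r n t - p|].

Lemma meas_A n eps : measurable (Aset n eps).
Proof.
have mf : measurable_fun setT (fun t => `|pbar r n t - p|).
  change (measurable_fun setT (@Num.norm _ R \o ((fun t => pbar r n t) \- cst p))).
  apply: measurableT_comp; first exact: normr_measurable.
  apply: measurable_funB => //.
  rewrite /pbar.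
  change (measurable_fun setT ((cst (n%:R^-1 : R)) \* (fun t => \sum_(i <- index_iota 1 n.+1) r i t))).
  apply: measurable_funM => //.
  apply: measurable_sum => i; exact: hr.
have := mf measurableT _ (measurable_itv `]eps, +oo[%R); rewrite setTI.
congr measurable; apply/seteqP; split => t /=; by rewrite in_itv /= andbT.
Qed.

Lemma pbar_Cs s t : Cs r s t -> pbar r (size s) t = mean s.
Proof.
move=> H; rewrite /pbar /mean /Ssum; congr (_ * _); apply: eq_big_nat => i Hi.
exact: H.
Qed.

Lemma Vup n eps : (1 <= n)%N -> 0 < eps ->
  V n <= eps ^+ 2 + fine (P (Aset n eps)).
Proof.
move=> hn he.
have S1 : \sum_(s <- pats R n) mu s = 1.
  by rewrite /mu (sum_nu P hr h01 n (@measurableT _ T)) probability_setT.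
have SA := sum_nu P hr h01 n (meas_A n eps).
rewrite -SA -[eps ^+ 2]mulr1 -S1 mulr_sumr -big_split /=.
rewrite /V big_seq [X in _ <= X]big_seq; apply: ler_sum => s Hs.
have [Hz /andP[h0 h1]] := pats_inv Hs.
have m0 : 0 <= mu s by apply: nu_ge0.
have nA0 : 0 <= nu P r (Aset n eps) s by apply: nu_ge0.
have mb : 0 <= mean s <= 1.
  rewrite /mean Hz; apply/andP; split.
    by apply: mulr_ge0; rewrite ?invr_ge0 ?ler0n.
  by rewrite ler_pdivrMl ?ltr0n // mulr1.
case: (lerP `|mean s - p| eps) => H.
  have : (mean s - p) ^+ 2 <= eps ^+ 2.
    by rewrite -real_normK ?num_real // ler_sqr // ?nnegrE ?normr_ge0 ?ltW.
  nra.
have -> : nu P r (Aset n eps) s = mu s.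
  rewrite /mu /nu setIT; congr (fine (P _)); apply/seteqP; split => t.
    by case.
  move=> Ht; split => //; rewrite /Aset /= -Hz pbar_Cs //.
have : (mean s - p) ^+ 2 <= 1.
  move: hp mb => /andP[? ?] /andP[? ?]; nra.
nra.
Qed.
End Main.

Theorem theoremA6 (R : realType) (d : measure_display) (T : measurableType d)
  (P : probability T R) (p : R) (lam : nat -> R) (r : nat -> T -> R) :
  0 < p < 1 ->
  lam 1%N = 1 ->
  (forall n, (1 < n)%N -> 0 <= lam n <= lam n.-1) ->
  (forall i, measurable_fun setT (r i)) ->
  (forall i t, r i t = 0 \/ r i t = 1) ->
  P [set t | r 1%N t = 1] = p%:E ->
  (forall (n : nat) (x : nat -> R), (2 <= n)%N ->
     P (cyl r n x `&` [set t | r n t = 1]) =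
     ((lam n * p + (1 - lam n) * ((n.-1)%:R^-1 * \sum_(1 <= i < n) x i))%:E
        * P (cyl r n x))%E) ->
  (forall eps : R, 0 < eps ->
     (fun n => P [set t | eps < `|pbar r n t - p|]) @ \oo --> 0%E) ->
  (fun n => \sum_(1 <= i < n.+1) lam i ^+ 2) @ \oo --> +oo.
Proof.
move=> hp hl1 hlam hr h01 hP1 hcond hcons.
have mono : forall n m, (n <= m)%N -> Lsum R lam n <= Lsum R lam m.
  move=> n m /subnK <-; elim: (m - n)%N => [|k IH]; first by rewrite add0n.
  rewrite addSn; apply: (le_trans IH); rewrite /Lsum [X in _ <= X]big_nat_recr //=.
  by rewrite lerDl sqr_ge0.
have [[B HB]|nb] := pselect (exists B, forall n, Lsum R lam n <= B); last first.
  apply/cvgryPge => A.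
  have [[n Hn]|H] := pselect (exists n, A < Lsum R lam n); last first.
    exfalso; apply: nb; exists A => n; rewrite leNgt; apply/negP => Hn.
    by apply: H; exists n.
  exists n => // m /= Hm; exact: ltW (lt_le_trans Hn (mono _ _ Hm)).
exfalso.
have B0 : 0 <= B by apply: (le_trans _ (HB 0%N)); rewrite /Lsum big_geq.
move: (hp) => /andP[p0 p1].
set c := p * (1 - p) * expR (-4 * (B + 1)).
have c0 : 0 < c by rewrite /c; apply: mulr_gt0; [apply: mulr_gt0; lra | apply: expR_gt0].
have c1 : c <= 1.
  have : expR (-4 * (B + 1)) <= 1 by rewrite expR_le1; lra.
  have : 0 < expR (-4 * (B + 1)) by apply: expR_gt0.
  rewrite /c; nra.
have Vge : forall n, (1 <= n)%N -> c <= V R d T P p r n.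
  move=> n hn; apply: (le_trans _ (Vlow _ _ _ _ _ _ _ hp hl1 hlam hr h01 hP1 hcond n hn)).
  rewrite /c ler_pM2l; last by apply: mulr_gt0; lra.
  rewrite ler_expR.
  have := Tsum_le _ _ hl1 n hn; have := HB n.
  have : 0 <= n%:R^-1 :> R by rewrite invr_ge0 ler0n.
  lra.
set eps := c / 2.
have e0 : 0 < eps by rewrite /eps; lra.
have e2 : eps ^+ 2 <= c / 2 by rewrite /eps; nra.
have := hcons eps e0.
move=> /fine_cvgP [_] /cvgrPdist_lt /(_ _ e0) [N _ HN].
have hn : (1 <= maxn N 1)%N by rewrite leq_maxr.
have := HN _ (leq_maxl N 1); rewrite /= sub0r normrN.
have := Vup R d T P p r hp hr h01 (maxn N 1) eps hn e0.
have := Vge _ hn.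
rewrite /Aset.
set F := fine _.
have F0 : 0 <= F by apply: fine_ge0.
rewrite ger0_norm //.
move=> h1 h2 h3; have Heps : eps = c / 2 by []; clear HN; clearbody c eps F; lra.
Qed.
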